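(* Let $K$ be a commutative ring with $1$, let $A$ be a $K$-algebra, and let $B$ be an ideal of $A$. If both $B$ and $A/B$ are finitely generated $K$-algebras, then $A$ is a finitely generated $K$-algebra. If both $B$ and $A/B$ are finitely presented $K$-algebras, then $A$ is a finitely presented $K$-algebra.
   Context: A $K$-algebra is a structure that is simultaneously an associative ring (not necessarily with identity) and a $K$-module, with $K$-bilinear multiplication. The free $K$-algebra $K\langle X\rangle$ on a set $X$ is the semigroup ring over $K$ of the free semigroup $X^+$ (no identity). A $K$-algebra is finitely generated if it is isomorphic to $K\langle X\rangle/I$ with $X$ finite and $I$ an ideal; finitely presented if moreover $I$ can be chosen finitely generated as an ideal. *)

(* Defs.v *)
From HB Require Import structures.
From mathcomp Require Import all_boot all_order all_algebra.
Set Implicit Arguments. Unset Strict Implicit. Unset Printing Implicit Defensive.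
Import GRing.Theory.
Local Open Scope ring_scope.

(* (Not necessarily unital) associative K-algebras: a K-module with an       *)
(* associative K-bilinear multiplication.  No identity is assumed.           *)
Record kalgType (K : comPzRingType) := KAlgType {
  kalg_sort :> lmodType K;
  kmul : kalg_sort -> kalg_sort -> kalg_sort;
  kmulA : forall x y z, kmul x (kmul y z) = kmul (kmul x y) z;
  kmulDl : forall x y z, kmul (x + y) z = kmul x z + kmul y z;
  kmulDr : forall x y z, kmul x (y + z) = kmul x y + kmul x z;
  kmulZl : forall (k : K) x y, kmul (k *: x) y = k *: kmul x y;
  kmulZr : forall (k : K) x y, kmul x (k *: y) = k *: kmul x y
}.

Definition is_ideal (K : comPzRingType) (A : kalgType K) (B : A -> Prop) :=
  [/\ B 0,
      (forall x y, B x -> B y -> B (x + y)),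
      (forall (k : K) x, B x -> B (k *: x)),
      (forall a x, B x -> B (kmul a x)) &
      (forall a x, B x -> B (kmul x a))].

(* The free K-algebra K<X> on the finite set X = 'I_n, i.e. the semigroup    *)
(* ring of the free semigroup X^+ (nonempty words).  An element is a         *)
(* coefficient function on words (seq 'I_n) with finite support and zero     *)
(* coefficient on the empty word.                                            *)
Definition fpoly (K : comPzRingType) (n : nat) (p : seq 'I_n -> K) : Prop :=
  p [::] = 0 /\ exists s : seq (seq 'I_n), forall w, w \notin s -> p w = 0.

Definition fzero (K : comPzRingType) (n : nat) : seq 'I_n -> K := fun _ => 0.
Definition fadd (K : comPzRingType) (n : nat) (p q : seq 'I_n -> K) :
  seq 'I_n -> K := fun w => p w + q w.
Definition fscale (K : comPzRingType) (n : nat) (k : K) (p : seq 'I_n -> K) :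
  seq 'I_n -> K := fun w => k * p w.
(* Semigroup-ring product: (pq)(w) = sum over w = u v of p(u) q(v); the     *)
(* term with u empty vanishes since p [::] = 0, and v ranges over nonempty   *)
(* suffixes.                                                                  *)
Definition fmul (K : comPzRingType) (n : nat) (p q : seq 'I_n -> K) :
  seq 'I_n -> K :=
  fun w => \sum_(i < size w) p (take i w) * q (drop i w).

Inductive fideal (K : comPzRingType) (n m : nat) (rs : 'I_m -> seq 'I_n -> K)
  : (seq 'I_n -> K) -> Prop :=
| fideal_gen i : fideal rs (rs i)
| fideal_zero : fideal rs (@fzero K n)
| fideal_add p q : fideal rs p -> fideal rs q -> fideal rs (fadd p q)
| fideal_scale (k : K) p : fideal rs p -> fideal rs (fscale k p)
| fideal_mull q p : fpoly q -> fideal rs p -> fideal rs (fmul q p)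
| fideal_mulr q p : fpoly q -> fideal rs p -> fideal rs (fmul p q).

(* Subquotients.  For S a subalgebra-carrier of A and J an ideal predicate,  *)
(* [fhom_onto A S J f] says that f : K<X> -> A takes values in S and induces *)
(* a surjective K-algebra homomorphism K<X> -> S/J (equality taken modulo J).*)
(* Its kernel is {p | J (f p)}.  We use:                                     *)
(*   the algebra A itself     : S = everything, J = {0}                      *)
(*   the ideal B as algebra   : S = B,          J = {0}                      *)
(*   the quotient algebra A/B : S = everything, J = B                        *)
Definition fhom_onto (K : comPzRingType) (A : kalgType K) (S J : A -> Prop)
  (n : nat) (f : (seq 'I_n -> K) -> A) : Prop :=
  [/\ (forall p, fpoly p -> S (f p)),
      (forall p q, fpoly p -> fpoly q -> J (f (fadd p q) - (f p + f q))),
      (forall (k : K) p, fpoly p -> J (f (fscale k p) - k *: f p)),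
      (forall p q, fpoly p -> fpoly q -> J (f (fmul p q) - kmul (f p) (f q))) &
      (forall a, S a -> exists2 p, fpoly p & J (a - f p))].

(* S/J is isomorphic to K<X>/I for some finite X and some ideal I. *)
Definition fg_subquot (K : comPzRingType) (A : kalgType K) (S J : A -> Prop) :=
  exists n (f : (seq 'I_n -> K) -> A), fhom_onto S J f.

(* ... with I moreover finitely generated as an ideal of K<X>. *)
Definition fp_subquot (K : comPzRingType) (A : kalgType K) (S J : A -> Prop) :=
  exists n (f : (seq 'I_n -> K) -> A), fhom_onto S J f /\
    exists m (rs : 'I_m -> seq 'I_n -> K), (forall i, fpoly (rs i)) /\
      (forall p, fpoly p -> (J (f p) <-> fideal rs p)).

Definition kall (K : comPzRingType) (A : kalgType K) : A -> Prop := fun _ => True.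
Definition kzero (K : comPzRingType) (A : kalgType K) : A -> Prop := fun x => x = 0.

Definition fin_gen (K : comPzRingType) (A : kalgType K) := fg_subquot (@kall K A) (@kzero K A).
Definition fin_pres (K : comPzRingType) (A : kalgType K) := fp_subquot (@kall K A) (@kzero K A).
Definition ideal_fin_gen (K : comPzRingType) (A : kalgType K) (B : A -> Prop) :=
  fg_subquot B (@kzero K A).
Definition ideal_fin_pres (K : comPzRingType) (A : kalgType K) (B : A -> Prop) :=
  fp_subquot B (@kzero K A).
Definition quot_fin_gen (K : comPzRingType) (A : kalgType K) (B : A -> Prop) :=
  fg_subquot (@kall K A) B.
Definition quot_fin_pres (K : comPzRingType) (A : kalgType K) (B : A -> Prop) :=
  fp_subquot (@kall K A) B.

(* Main.v *)
Require Import Defs.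
From HB Require Import structures.
From mathcomp Require Import all_boot all_order all_algebra.
From Stdlib Require Import ClassicalEpsilon FunctionalExtensionality.
Set Implicit Arguments. Unset Strict Implicit. Unset Printing Implicit Defensive.
Import GRing.Theory.
Local Open Scope ring_scope.

Section Poly.
Variable K : comPzRingType.
Variable n : nat.
Local Notation P := (seq 'I_n -> K).
Implicit Types p q : P.

Definition letter (i : 'I_n) : P := fun w => if w == [:: i] then 1 else 0.

Lemma feq (p q : P) : (forall w, p w = q w) -> p = q.
Proof. exact: functional_extensionality. Qed.

Lemma fpoly0 : fpoly (@fzero K n).
Proof. by split => //; exists [::]. Qed.

Lemma fpolyD p q : fpoly p -> fpoly q -> fpoly (fadd p q).
Proof.
move=> [p0 [s Hs]] [q0 [t Ht]]; split; first by rewrite /fadd p0 q0 addr0.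
exists (s ++ t) => w; rewrite mem_cat negb_or => /andP[/Hs ps /Ht qt].
by rewrite /fadd ps qt addr0.
Qed.

Lemma fpolyZ k p : fpoly p -> fpoly (fscale k p).
Proof.
move=> [p0 [s Hs]]; split; first by rewrite /fscale p0 mulr0.
by exists s => w /Hs; rewrite /fscale => ->; rewrite mulr0.
Qed.

Lemma fpoly_letter i : fpoly (letter i).
Proof.
split; first by [].
by exists [:: [:: i]] => w; rewrite inE /letter => /negbTE ->.
Qed.

Lemma fmul_letterE i q : q [::] = 0 ->
  fmul (letter i) q = fun w => match w with [::] => 0 | z :: w' => if z == i then q w' else 0 end.
Proof.
move=> q0; apply: feq => -[|z w]; rewrite /fmul ?big_ord0 //=.
rewrite big_ord_recl /= {1}/letter /= mul0r add0r.
case: w => [|y w]; first by rewrite big_ord0; case: (z == i).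
rewrite big_ord_recl /= /letter /=.
rewrite big1 ?addr0; last by move=> k _; rewrite eqseq_cons /= andbF mul0r.
by rewrite eqseq_cons andbT; case: (z == i); rewrite ?mul1r ?mul0r.
Qed.



Lemma fmul_nil p q : fmul p q [::] = 0.
Proof. by rewrite /fmul big_ord0. Qed.

Lemma fpolyML i q : fpoly q -> fpoly (fmul (letter i) q).
Proof.
move=> [q0 [s Hs]]; rewrite fmul_letterE //; split => //.
exists (map (cons i) s) => -[|z w] //.
case: eqP => [->|//] Hw; apply: Hs; apply: contra Hw => Hw.
by apply/mapP; exists w.
Qed.

Inductive Gen : P -> Prop :=
| Gen0 : Gen (@fzero K n)
| GenL i : Gen (letter i)
| GenD p q : Gen p -> Gen q -> Gen (fadd p q)
| GenZ k p : Gen p -> Gen (fscale k p)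
| GenM i p : Gen p -> Gen (fmul (letter i) p).

Lemma Gen_fpoly p : Gen p -> fpoly p.
Proof.
elim=> *; by [apply: fpoly0|apply: fpoly_letter|apply: fpolyD|apply: fpolyZ|apply: fpolyML].
Qed.

Definition mono (w : seq 'I_n) : P := fun v => if v == w then 1 else 0.

Lemma Gen_mono w : w != [::] -> Gen (mono w).
Proof.
elim: w => [//|i w IH] _.
case: w IH => [|j w] IH.
  by have -> : mono [:: i] = letter i by []; exact: GenL.
have -> : mono [:: i, j & w] = fmul (letter i) (mono (j :: w)).
  rewrite fmul_letterE //; apply: feq => -[|z v] //.
  by rewrite /mono eqseq_cons; case: (z == i).
exact/GenM/IH.
Qed.

Lemma fpoly_Gen p : fpoly p -> Gen p.
Proof.
move=> [p0 [s Hs]]; elim: s p p0 Hs => [|w s IH] p p0 Hs.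
  have -> : p = @fzero K n by apply: feq => w; exact: Hs.
  exact: Gen0.
have [wE|wn] := eqVneq w [::].
  rewrite {}wE in Hs; apply: IH => // v vs; have [->//|vn] := eqVneq v [::].
  by apply: Hs; rewrite inE negb_or vn.
pose p' : P := fun v => if v == w then 0 else p v.
have -> : p = fadd (fscale (p w) (mono w)) p'.
  apply: feq => v; rewrite /fadd /fscale /mono /p'.
  by case: eqP => [->|_]; rewrite ?mulr1 ?addr0 ?mulr0 ?add0r.
apply: GenD; first exact/GenZ/Gen_mono.
apply: IH; first by rewrite /p' eq_sym (negbTE wn).
move=> v vs; rewrite /p'; case: eqP => // /eqP vw.
by apply: Hs; rewrite inE negb_or vw.
Qed.

Lemma fmul0l q : fmul (@fzero K n) q = @fzero K n.
Proof. by apply: feq => w; rewrite /fmul big1 // => k _; rewrite /fzero mul0r. Qed.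

Lemma fmul0r p : fmul p (@fzero K n) = @fzero K n.
Proof. by apply: feq => w; rewrite /fmul big1 // => k _; rewrite /fzero mulr0. Qed.

Lemma fmulDl p1 p2 q : fmul (fadd p1 p2) q = fadd (fmul p1 q) (fmul p2 q).
Proof.
by apply: feq => w; rewrite /fmul /fadd -big_split; apply: eq_bigr => k _; rewrite mulrDl.
Qed.

Lemma fmulDr p q1 q2 : fmul p (fadd q1 q2) = fadd (fmul p q1) (fmul p q2).
Proof.
by apply: feq => w; rewrite /fmul /fadd -big_split; apply: eq_bigr => k _; rewrite mulrDr.
Qed.

Lemma fmulZl k p q : fmul (fscale k p) q = fscale k (fmul p q).
Proof.
by apply: feq => w; rewrite /fmul /fscale mulr_sumr; apply: eq_bigr => j _; rewrite mulrA.
Qed.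

Lemma fmulZr k p q : fmul p (fscale k q) = fscale k (fmul p q).
Proof.
by apply: feq => w; rewrite /fmul /fscale mulr_sumr; apply: eq_bigr => j _; rewrite mulrCA.
Qed.

Lemma fmulA_letter i p q : p [::] = 0 ->
  fmul (fmul (letter i) p) q = fmul (letter i) (fmul p q).
Proof.
move=> p0; rewrite (fmul_letterE i (fmul_nil p q)) (fmul_letterE i p0).
apply: feq => -[|z w]; rewrite /fmul ?big_ord0 //=.
rewrite big_ord_recl /= mul0r add0r.
case: (z == i); last by rewrite big1 // => k _; rewrite mul0r.
by [].
Qed.

Lemma fpolyM p q : fpoly p -> fpoly q -> fpoly (fmul p q).
Proof.
move=> /fpoly_Gen Gp Fq; elim: Gp => {p}.
- by rewrite fmul0l; exact: fpoly0.
- by move=> i; exact: fpolyML.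
- by move=> p1 p2 _ H1 _ H2; rewrite fmulDl; exact: fpolyD.
- by move=> k p _ H; rewrite fmulZl; exact: fpolyZ.
- move=> i p Gp H; rewrite fmulA_letter; first exact: fpolyML.
  by case: (Gen_fpoly Gp).
Qed.

End Poly.
Arguments letter {K n} i w.
Arguments mono {K n} w v.

Section KAlg.
Variables (K : comPzRingType) (A : kalgType K).
Implicit Types x y z : A.

Lemma kmul0l y : kmul (0 : A) y = 0.
Proof. by rewrite -[X in kmul X _](scale0r (0 : A)) kmulZl scale0r. Qed.
Lemma kmul0r x : kmul x (0 : A) = 0.
Proof. by rewrite -[X in kmul _ X](scale0r (0 : A)) kmulZr scale0r. Qed.
Lemma kmulNl x y : kmul (- x) y = - kmul x y.
Proof. by rewrite -[X in kmul X _]scaleN1r kmulZl scaleN1r. Qed.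
Lemma kmulNr x y : kmul x (- y) = - kmul x y.
Proof. by rewrite -[X in kmul _ X]scaleN1r kmulZr scaleN1r. Qed.
Lemma kmulBl x y z : kmul (x - y) z = kmul x z - kmul y z.
Proof. by rewrite kmulDl kmulNl. Qed.
Lemma kmulBr x y z : kmul x (y - z) = kmul x y - kmul x z.
Proof. by rewrite kmulDr kmulNr. Qed.
Lemma kmul_sumr (I : Type) (r : seq I) (F : I -> A) x :
  kmul x (\sum_(i <- r) F i) = \sum_(i <- r) kmul x (F i).
Proof.
elim: r => [|i r IH]; first by rewrite !big_nil kmul0r.
by rewrite !big_cons kmulDr IH.
Qed.

Definition eqJ (J : A -> Prop) x y := J (x - y).

Section EqJ.
Variable J : A -> Prop.
Hypothesis HJ : is_ideal J.

Lemma J0 : J 0. Proof. by case: HJ. Qed.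
Lemma JD x y : J x -> J y -> J (x + y). Proof. by case: HJ => _ H _ _ _; apply: H. Qed.
Lemma JZ k x : J x -> J (k *: x). Proof. by case: HJ => _ _ H _ _; apply: H. Qed.
Lemma JN x : J x -> J (- x). Proof. by move=> /(JZ (-1)); rewrite scaleN1r. Qed.
Lemma JMl a x : J x -> J (kmul a x). Proof. by case: HJ => _ _ _ H _; apply: H. Qed.
Lemma JMr a x : J x -> J (kmul x a). Proof. by case: HJ => _ _ _ _ H; apply: H. Qed.

Lemma eqJ_refl x : eqJ J x x. Proof. by rewrite /eqJ subrr; exact: J0. Qed.
Lemma eqJ_eq x y : x = y -> eqJ J x y. Proof. by move=> ->; exact: eqJ_refl. Qed.
Lemma eqJ_sym x y : eqJ J x y -> eqJ J y x.
Proof. by rewrite /eqJ => /JN; rewrite opprB. Qed.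
Lemma eqJ_trans x y z : eqJ J x y -> eqJ J y z -> eqJ J x z.
Proof. by rewrite /eqJ => H1 H2; have := JD H1 H2; rewrite addrA subrK. Qed.
Lemma eqJ_add x x' y y' : eqJ J x x' -> eqJ J y y' -> eqJ J (x + y) (x' + y').
Proof. by rewrite /eqJ => H1 H2; have := JD H1 H2; rewrite opprD addrACA. Qed.
Lemma eqJ_scale k x x' : eqJ J x x' -> eqJ J (k *: x) (k *: x').
Proof. by rewrite /eqJ => /(JZ k); rewrite scalerBr. Qed.
Lemma eqJ_mul x x' y y' : eqJ J x x' -> eqJ J y y' -> eqJ J (kmul x y) (kmul x' y').
Proof.
rewrite /eqJ => H1 H2; have := JD (JMr y H1) (JMl x' H2).
by rewrite kmulBl kmulBr addrA subrK.
Qed.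
End EqJ.

Lemma is_ideal_kzero : is_ideal (@kzero K A).
Proof.
rewrite /kzero; split => //.
- by move=> x y -> ->; rewrite addr0.
- by move=> k x ->; rewrite scaler0.
- by move=> a x ->; rewrite kmul0r.
- by move=> a x ->; rewrite kmul0l.
Qed.

Lemma eqJ_kzero x y : eqJ (@kzero K A) x y <-> x = y.
Proof.
rewrite /eqJ /kzero; split; last by move=> ->; rewrite subrr.
by move/eqP; rewrite subr_eq0 => /eqP.
Qed.

End KAlg.

Section Eval.
Variables (K : comPzRingType) (A : kalgType K) (n : nat) (a : 'I_n -> A).
Local Notation P := (seq 'I_n -> K).
Implicit Types p q : P.

Fixpoint evw (w : seq 'I_n) : A :=
  match w with [::] => 0 | i :: w' => if w' is [::] then a i else kmul (a i) (evw w') end.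

Definition supp p : seq (seq 'I_n) :=
  epsilon (inhabits [::]) (fun s => forall w, w \notin s -> p w = 0).

Definition ev p : A := \sum_(w <- undup (supp p)) p w *: evw w.

Lemma sum_undup_eq (F : seq 'I_n -> A) s1 s2 :
  (forall w, w \notin s1 -> F w = 0) -> (forall w, w \notin s2 -> F w = 0) ->
  \sum_(w <- undup s1) F w = \sum_(w <- undup s2) F w.
Proof.
move=> H1 H2.
have E : forall s t : seq (seq 'I_n), (forall w, w \notin t -> F w = 0) ->
    \sum_(w <- undup s) F w = \sum_(w <- filter (mem t) (undup s)) F w.
  move=> s t Ht; rewrite big_filter [RHS]big_mkcond /=. apply: eq_bigr => w _.
  by case: ifP => // /negbT /Ht.
rewrite (E s1 s2 H2) (E s2 s1 H1); apply: perm_big; apply: uniq_perm.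
- exact/filter_uniq/undup_uniq.
- exact/filter_uniq/undup_uniq.
by move=> w; rewrite !mem_filter !mem_undup andbC.
Qed.

Lemma supp_spec p : fpoly p -> forall w, w \notin supp p -> p w = 0.
Proof.
move=> [_ [s Hs]].
have := epsilon_spec (inhabits [::]) (fun s : seq (seq 'I_n) => forall w, w \notin s -> p w = 0).
by apply; exists s.
Qed.

Lemma evE p s : fpoly p -> (forall w, w \notin s -> p w = 0) ->
  ev p = \sum_(w <- undup s) p w *: evw w.
Proof.
move=> Fp Hs; apply: sum_undup_eq => w.
  by move/(supp_spec Fp) => ->; rewrite scale0r.
by move/Hs => ->; rewrite scale0r.
Qed.

Lemma ev0 : ev (@fzero K n) = 0.
Proof. by rewrite (evE (s := [::])) ?big_nil //; exact: fpoly0. Qed.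

Lemma evD p q : fpoly p -> fpoly q -> ev (fadd p q) = ev p + ev q.
Proof.
move=> Fp Fq; set s := supp p ++ supp q.
have Hp : forall w, w \notin s -> p w = 0.
  by move=> w; rewrite mem_cat negb_or => /andP[/(supp_spec Fp)].
have Hq : forall w, w \notin s -> q w = 0.
  by move=> w; rewrite mem_cat negb_or => /andP[_ /(supp_spec Fq)].
rewrite (evE (s := s)) ?(evE Fp Hp) ?(evE Fq Hq); last 2 first.
- exact: fpolyD.
- by move=> w ws; rewrite /fadd Hp ?Hq ?addr0.
by rewrite -big_split; apply: eq_bigr => w _; rewrite /fadd scalerDl.
Qed.

Lemma evZ k p : fpoly p -> ev (fscale k p) = k *: ev p.
Proof.
move=> Fp; rewrite (evE (s := supp p)) ?(evE Fp (supp_spec Fp)); last 2 first.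
- exact: fpolyZ.
- by move=> w /(supp_spec Fp); rewrite /fscale => ->; rewrite mulr0.
by rewrite scaler_sumr; apply: eq_bigr => w _; rewrite /fscale scalerA.
Qed.

Lemma ev_letter i : ev (letter i) = a i.
Proof.
rewrite (evE (s := [:: [:: i]])); first by rewrite /= big_seq1 /letter eqxx scale1r.
  exact: fpoly_letter.
by move=> w; rewrite inE /letter => /negbTE ->.
Qed.

Lemma evML i q : fpoly q -> ev (fmul (letter i) q) = kmul (a i) (ev q).
Proof.
move=> Fq; have q0 : q [::] = 0 by case: Fq.
rewrite (evE Fq (supp_spec Fq)) (evE (s := map (cons i) (supp q))).
- rewrite undup_map_inj; last by move=> x y [].
  rewrite big_map kmul_sumr; apply: eq_bigr => u _.
  rewrite fmul_letterE // eqxx kmulZr.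
  by case: u => [|j u] //=; rewrite q0 !scale0r.
- exact: fpolyML.
rewrite fmul_letterE // => -[|z w] //; case: eqP => [->|//] Hw.
apply: (supp_spec Fq); apply: contra Hw => Hw; exact: map_f.
Qed.

Lemma evM p q : fpoly p -> fpoly q -> ev (fmul p q) = kmul (ev p) (ev q).
Proof.
move=> /fpoly_Gen Gp Fq; elim: Gp => {p}.
- by rewrite fmul0l ev0 kmul0l.
- by move=> i; rewrite evML // ev_letter.
- move=> p1 p2 G1 H1 G2 H2; have F1 := Gen_fpoly G1; have F2 := Gen_fpoly G2.
  by rewrite fmulDl evD ?H1 ?H2 ?evD ?kmulDl //; apply: fpolyM.
- move=> k p G H; have Fp := Gen_fpoly G.
  by rewrite fmulZl evZ ?H ?evZ ?kmulZl //; apply: fpolyM.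
- move=> i p G H; have Fp := Gen_fpoly G; rewrite fmulA_letter; last by case: Fp.
  by rewrite evML ?H ?evML ?kmulA //; exact: fpolyM.
Qed.

End Eval.

Section Emb.
Variables (K : comPzRingType) (k N : nat) (s : 'I_k -> 'I_N).
Hypothesis sinj : injective s.
Implicit Types p q : seq 'I_k -> K.

Fixpoint unl (w : seq 'I_N) : option (seq 'I_k) :=
  match w with
  | [::] => Some [::]
  | z :: w' => match [pick i | s i == z], unl w' with
               | Some i, Some u => Some (i :: u)
               | _, _ => None end
  end.

Lemma unl_map u : unl (map s u) = Some u.
Proof.
elim: u => //= i u ->; case: pickP => [j /eqP /sinj -> //|/(_ i)].
by rewrite eqxx.
Qed.

Lemma unl_some w u : unl w = Some u -> w = map s u.
Proof.
elim: w u => [|z w IH] u /=; first by case=> <-.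
case: pickP => [j /eqP <-|_] //; case E: (unl w) => [v|] // [<-] /=.
by rewrite (IH v).
Qed.

Definition emb p : seq 'I_N -> K := fun w => if unl w is Some u then p u else 0.

Lemma emb_nil p : emb p [::] = p [::].
Proof. by []. Qed.

Lemma emb0 : emb (@fzero K k) = @fzero K N.
Proof. by apply: feq => w; rewrite /emb; case: (unl w). Qed.

Lemma embD p q : emb (fadd p q) = fadd (emb p) (emb q).
Proof. by apply: feq => w; rewrite /emb /fadd; case: (unl w) => // ; rewrite addr0. Qed.

Lemma embZ c p : emb (fscale c p) = fscale c (emb p).
Proof. by apply: feq => w; rewrite /emb /fscale; case: (unl w) => // ; rewrite mulr0. Qed.

Lemma emb_letter i : emb (letter i) = letter (s i).
Proof.
apply: feq => w; rewrite /emb; case E: (unl w) => [u|].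
  rewrite (unl_some E) /letter.
  by rewrite -[ [:: s i] ]/(map s [:: i]) (inj_eq (inj_map sinj)).
rewrite /letter; case: eqP => // wE; move: E; rewrite wE.
by rewrite -[ [:: s i] ]/(map s [:: i]) unl_map.
Qed.

Lemma emb_fpoly p : fpoly p -> fpoly (emb p).
Proof.
move=> [p0 [t Ht]]; split; first by rewrite emb_nil.
exists (map (map s) t) => w; rewrite /emb; case E: (unl w) => [u|] // Hw.
apply: Ht; apply: contra Hw => Hu; rewrite (unl_some E); exact: map_f.
Qed.

Lemma embML i q : q [::] = 0 -> emb (fmul (letter i) q) = fmul (letter (s i)) (emb q).
Proof.
move=> q0; rewrite fmul_letterE // fmul_letterE; last by rewrite emb_nil.
apply: feq => -[|z w] //; rewrite /emb /=.
case: pickP => [j /eqP jz|nj]; case E: (unl w) => [u|].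
- by rewrite -jz (inj_eq sinj).
- by case: ifP.
- by have := nj i; rewrite eq_sym => /negbT/negbTE ->.
- by case: ifP.
Qed.

Lemma embM p q : fpoly p -> fpoly q -> emb (fmul p q) = fmul (emb p) (emb q).
Proof.
move=> /fpoly_Gen Gp Fq; elim: Gp => {p}.
- by rewrite fmul0l emb0 fmul0l.
- by move=> i; rewrite embML ?emb_letter //; case: Fq.
- by move=> p1 p2 _ H1 _ H2; rewrite fmulDl !embD H1 H2 fmulDl.
- by move=> c p _ H; rewrite fmulZl !embZ H fmulZl.
- move=> i p G H; have [p0 _] := Gen_fpoly G.
  rewrite fmulA_letter // embML ?fmul_nil // H embML //.
  by rewrite fmulA_letter // emb_nil.
Qed.

End Emb.

Section Hom.
Variables (K : comPzRingType) (A : kalgType K) (n : nat).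
Local Notation P := (seq 'I_n -> K).

Definition hom_mod (J : A -> Prop) (phi : P -> A) :=
  [/\ (forall p q, fpoly p -> fpoly q -> eqJ J (phi (fadd p q)) (phi p + phi q)),
      (forall c p, fpoly p -> eqJ J (phi (fscale c p)) (c *: phi p)) &
      (forall p q, fpoly p -> fpoly q -> eqJ J (phi (fmul p q)) (kmul (phi p) (phi q)))].

Lemma fhom_hom S J phi : fhom_onto S J phi -> hom_mod J phi.
Proof. by case. Qed.

Lemma ev_hom J (a : 'I_n -> A) : is_ideal J -> hom_mod J (ev a).
Proof.
move=> HJ; split => *; apply: eqJ_eq => //.
- exact: evD.
- exact: evZ.
- exact: evM.
Qed.

Lemma hom_zero J phi : is_ideal J -> hom_mod J phi -> J (phi (@fzero K n)).
Proof.
move=> HJ [Hadd _ _]; have := Hadd _ _ (@fpoly0 K n) (@fpoly0 K n).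
have -> : fadd (@fzero K n) (@fzero K n) = @fzero K n by apply: feq => w; rewrite /fadd addr0.
rewrite /eqJ opprD addrA subrr add0r => /(JN HJ); by rewrite opprK.
Qed.

Lemma agree J phi psi : is_ideal J -> hom_mod J phi -> hom_mod J psi ->
  (forall i, eqJ J (phi (letter i)) (psi (letter i))) ->
  forall p, fpoly p -> eqJ J (phi p) (psi p).
Proof.
move=> HJ Hphi Hpsi Hl p /fpoly_Gen Gp.
have [aphi zphi mphi] := Hphi; have [apsi zpsi mpsi] := Hpsi.
elim: Gp => {p}.
- exact: (JD HJ (hom_zero HJ Hphi) (JN HJ (hom_zero HJ Hpsi))).
- exact: Hl.
- move=> p q Gp Hp Gq Hq; have Fp := Gen_fpoly Gp; have Fq := Gen_fpoly Gq.
  apply: eqJ_trans (aphi _ _ Fp Fq) _ => //.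
  apply: eqJ_trans (eqJ_sym HJ (apsi _ _ Fp Fq)) => //.
  exact: eqJ_add.
- move=> c p Gp Hp; have Fp := Gen_fpoly Gp.
  apply: eqJ_trans (zphi _ _ Fp) _ => //.
  apply: eqJ_trans (eqJ_sym HJ (zpsi _ _ Fp)) => //.
  exact: eqJ_scale.
- move=> i p Gp Hp; have Fp := Gen_fpoly Gp; have Fl := fpoly_letter K i.
  apply: eqJ_trans (mphi _ _ Fl Fp) _ => //.
  apply: eqJ_trans (eqJ_sym HJ (mpsi _ _ Fl Fp)) => //.
  exact: eqJ_mul.
Qed.
End Hom.

Lemma evemb_hom (K : comPzRingType) (A : kalgType K) k N (s : 'I_k -> 'I_N) (a : 'I_N -> A) J :
  injective s -> is_ideal J -> hom_mod J (fun p => ev a (emb s p)).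
Proof.
move=> sinj HJ; split => *; apply: eqJ_eq => //.
- by rewrite embD evD //; apply: emb_fpoly.
- by rewrite embZ evZ //; apply: emb_fpoly.
- by rewrite embM // evM //; apply: emb_fpoly.
Qed.

Lemma fideal_fpoly (K : comPzRingType) n m (rs : 'I_m -> seq 'I_n -> K) p :
  (forall i, fpoly (rs i)) -> fideal rs p -> fpoly p.
Proof.
move=> Hrs; elim => *.
- exact: Hrs.
- exact: fpoly0.
- exact: fpolyD.
- exact: fpolyZ.
- exact: fpolyM.
- exact: fpolyM.
Qed.

Definition minus (K : comPzRingType) n (p q : seq 'I_n -> K) := fadd p (fscale (-1) q).

Section Cong.
Variables (K : comPzRingType) (N M : nat) (rs : 'I_M -> seq 'I_N -> K).
Local Notation P := (seq 'I_N -> K).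
Implicit Types p q r : P.
Definition cong p q := fideal rs (minus p q).

Lemma cong_eq p q : p = q -> cong p q.
Proof.
move=> ->; rewrite /cong.
have -> : minus q q = @fzero K N by apply: feq => w; rewrite /minus /fadd /fscale mulN1r subrr.
exact: fideal_zero.
Qed.
Lemma cong_sym p q : cong p q -> cong q p.
Proof.
rewrite /cong => /(fideal_scale (-1)).
suff -> : fscale (-1) (minus p q) = minus q p by [].
by apply: feq => w; rewrite /minus /fadd /fscale !mulN1r opprD opprK addrC.
Qed.
Lemma cong_trans p q r : cong p q -> cong q r -> cong p r.
Proof.
rewrite /cong => H1 H2; have := fideal_add H1 H2.
suff -> : fadd (minus p q) (minus q r) = minus p r by [].
by apply: feq => w; rewrite /minus /fadd /fscale !mulN1r addrA subrK.
Qed.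
Lemma congD p p' q q' : cong p p' -> cong q q' -> cong (fadd p q) (fadd p' q').
Proof.
rewrite /cong => H1 H2; have := fideal_add H1 H2.
suff -> : fadd (minus p p') (minus q q') = minus (fadd p q) (fadd p' q') by [].
by apply: feq => w; rewrite /minus /fadd /fscale !mulN1r opprD addrACA.
Qed.
Lemma congZ c p p' : cong p p' -> cong (fscale c p) (fscale c p').
Proof.
rewrite /cong => /(fideal_scale c).
suff -> : fscale c (minus p p') = minus (fscale c p) (fscale c p') by [].
by apply: feq => w; rewrite /minus /fadd /fscale !mulN1r mulrDr mulrN.
Qed.
Lemma congMl r p p' : fpoly r -> cong p p' -> cong (fmul r p) (fmul r p').
Proof.
rewrite /cong => Fr /(fideal_mull Fr).
by rewrite /minus fmulDr fmulZr.
Qed.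
Lemma congMr r p p' : fpoly r -> cong p p' -> cong (fmul p r) (fmul p' r).
Proof.
rewrite /cong => Fr /(fideal_mulr Fr).
by rewrite /minus fmulDl fmulZl.
Qed.
Lemma cong_ideal p : cong p (@fzero K N) -> fideal rs p.
Proof.
rewrite /cong; suff -> : minus p (@fzero K N) = p by [].
by apply: feq => w; rewrite /minus /fadd /fscale /fzero mulr0 addr0.
Qed.
Lemma ideal_cong p : fideal rs p -> cong p (@fzero K N).
Proof.
rewrite /cong; suff -> : minus p (@fzero K N) = p by [].
by apply: feq => w; rewrite /minus /fadd /fscale /fzero mulr0 addr0.
Qed.
End Cong.

Section Main.
Variables (K : comPzRingType) (A : kalgType K) (B : A -> Prop).
Hypothesis HB : is_ideal B.
Variables (n m : nat) (f : (seq 'I_n -> K) -> A) (g : (seq 'I_m -> K) -> A).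
Hypothesis Hf : fhom_onto B (@kzero K A) f.
Hypothesis Hg : fhom_onto (@kall K A) B g.

Definition sX : 'I_n -> 'I_(n + m) := lshift m.
Definition sY : 'I_m -> 'I_(n + m) := @rshift n m.
Lemma sX_inj : injective sX. Proof. exact: lshift_inj. Qed.
Lemma sY_inj : injective sY. Proof. exact: rshift_inj. Qed.

Definition aa (z : 'I_(n + m)) : A :=
  match split z with inl i => f (letter i) | inr j => g (letter j) end.

Lemma aaX i : aa (sX i) = f (letter i).
Proof. by rewrite /aa /sX -[lshift m i]/(unsplit (inl _ i)) unsplitK. Qed.
Lemma aaY j : aa (sY j) = g (letter j).
Proof. by rewrite /aa /sY -[rshift n j]/(unsplit (inr _ j)) unsplitK. Qed.

Definition h := ev aa.
Definition eX := @emb K _ _ sX.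
Definition eY := @emb K _ _ sY.

Lemma hX p : fpoly p -> h (eX p) = f p.
Proof.
move=> Fp; apply/esym/eqJ_kzero.
apply: (@agree K A n (@kzero K A) f (fun p => h (eX p))) Fp.
- exact: is_ideal_kzero.
- exact: fhom_hom Hf.
- exact/evemb_hom/is_ideal_kzero/sX_inj.
move=> i; apply/eqJ_kzero; rewrite /= /h /eX emb_letter ?ev_letter ?aaX //; exact: sX_inj.
Qed.

Lemma hY p : fpoly p -> eqJ B (g p) (h (eY p)).
Proof.
move=> Fp; apply: (@agree K A m B g (fun p => h (eY p))) Fp => //.
- exact: fhom_hom Hg.
- exact/evemb_hom/HB/sY_inj.
move=> i; apply: eqJ_eq => //; rewrite /= /h /eY emb_letter ?ev_letter ?aaY //; exact: sY_inj.
Qed.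

Lemma fX p : fpoly p -> fpoly (eX p). Proof. exact: emb_fpoly. Qed.
Lemma fY p : fpoly p -> fpoly (eY p). Proof. exact: emb_fpoly. Qed.

Lemma h_onto x : exists2 p, fpoly p & x = h p.
Proof.
have [_ _ _ _ Sg] := Hg; have [_ _ _ _ Sf] := Hf.
have [q Fq Bq] := Sg x I.
have Bx : B (x - h (eY q)) by apply: eqJ_trans (hY Fq).
have [p Fp] := Sf _ Bx; rewrite /kzero => /eqP; rewrite subr_eq0 => /eqP E.
exists (fadd (eY q) (eX p)); first by apply: fpolyD; [apply: fY|apply: fX].
have -> : h (fadd (eY q) (eX p)) = h (eY q) + h (eX p) by apply: evD; [apply: fY|apply: fX].
rewrite hX //.
by rewrite -E addrC subrK.
Qed.

Lemma h_fhom : fhom_onto (@kall K A) (@kzero K A) h.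
Proof.
have [H1 H2 H3] := ev_hom aa (is_ideal_kzero A).
split => //; move=> x _; have [p Fp ->] := h_onto x; exists p => //.
by rewrite /kzero subrr.
Qed.



Variables (mB mQ : nat) (rsB : 'I_mB -> seq 'I_n -> K) (rsQ : 'I_mQ -> seq 'I_m -> K).
Hypothesis FrsB : forall i, fpoly (rsB i).
Hypothesis FrsQ : forall i, fpoly (rsQ i).
Hypothesis HrsB : forall p, fpoly p -> (kzero (f p) <-> fideal rsB p).
Hypothesis HrsQ : forall p, fpoly p -> (B (g p) <-> fideal rsQ p).

Local Notation PZ := (seq 'I_(n + m) -> K).

Lemma JofeqJ (J : A -> Prop) x y : is_ideal J -> J y -> eqJ J x y -> J x.
Proof. by move=> HJ Jy Jxy; have := JD HJ Jxy Jy; rewrite subrK. Qed.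

Definition pre (x : A) : seq 'I_n -> K :=
  epsilon (inhabits (@fzero K n)) (fun p => fpoly p /\ f p = x).

Lemma pre_spec x : B x -> fpoly (pre x) /\ f (pre x) = x.
Proof.
move=> Bx; have [_ _ _ _ Sf] := Hf; have [p Fp] := Sf x Bx.
rewrite /kzero => /eqP; rewrite subr_eq0 => /eqP E.
have := epsilon_spec (inhabits (@fzero K n)) (fun p => fpoly p /\ f p = x).
by apply; exists p.
Qed.

Lemma Bf p : fpoly p -> B (f p).
Proof. by have [H _ _ _ _] := Hf; apply: H. Qed.

Definition cc k := pre (h (eY (rsQ k))).
Definition ss (j : 'I_m) (i : 'I_n) := pre (kmul (aa (sY j)) (aa (sX i))).
Definition tt (i : 'I_n) (j : 'I_m) := pre (kmul (aa (sX i)) (aa (sY j))).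

Lemma cc_spec k : fpoly (cc k) /\ f (cc k) = h (eY (rsQ k)).
Proof.
apply: pre_spec; apply: (JofeqJ HB (y := g (rsQ k))).
- by apply/HrsQ => //; exact: fideal_gen.
- by apply: (eqJ_sym HB); apply: hY.
Qed.
Lemma ss_spec j i : fpoly (ss j i) /\ f (ss j i) = kmul (aa (sY j)) (aa (sX i)).
Proof. by apply: pre_spec; apply: (JMl HB); rewrite aaX; apply/Bf/fpoly_letter. Qed.
Lemma tt_spec i j : fpoly (tt i j) /\ f (tt i j) = kmul (aa (sX i)) (aa (sY j)).
Proof. by apply: pre_spec; apply: (JMr HB); rewrite aaX; apply/Bf/fpoly_letter. Qed.

Definition RT := ('I_mB + ('I_mQ + ('I_m * 'I_n + 'I_n * 'I_m)))%type.

Definition Rel (x : RT) : PZ :=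
  match x with
  | inl k => eX (rsB k)
  | inr (inl k) => minus (eY (rsQ k)) (eX (cc k))
  | inr (inr (inl (j, i))) => minus (fmul (letter (sY j)) (letter (sX i))) (eX (ss j i))
  | inr (inr (inr (i, j))) => minus (fmul (letter (sX i)) (letter (sY j))) (eX (tt i j))
  end.

Definition rs (r : 'I_#|{: RT}|) : PZ := Rel (enum_val r).

Lemma rs_gen x : fideal rs (Rel x).
Proof. by have := fideal_gen rs (enum_rank x); rewrite /rs enum_rankK. Qed.

Lemma fminus (p q : PZ) : fpoly p -> fpoly q -> fpoly (minus p q).
Proof. by move=> Fp Fq; apply: fpolyD => //; apply: fpolyZ. Qed.

Lemma hminus (p q : PZ) : fpoly p -> fpoly q -> h (minus p q) = h p - h q.
Proof. by move=> Fp Fq; rewrite /h /minus evD ?evZ ?scaleN1r //; apply: fpolyZ. Qed.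

Lemma Frel x : fpoly (Rel x).
Proof.
case: x => [k|[k|[[j i]|[i j]]]] /=.
- exact: fX.
- by apply: fminus; [apply: fY|apply/fX; case: (cc_spec k)].
- by apply: fminus; [apply: fpolyM; apply: fpoly_letter|apply/fX; case: (ss_spec j i)].
- by apply: fminus; [apply: fpolyM; apply: fpoly_letter|apply/fX; case: (tt_spec i j)].
Qed.

Lemma Frs r : fpoly (rs r). Proof. exact: Frel. Qed.

Lemma h_letter z : h (letter z) = aa z. Proof. exact: ev_letter. Qed.

Lemma hrel x : h (Rel x) = 0.
Proof.
case: x => [k|[k|[[j i]|[i j]]]] /=.
- by rewrite (hX (FrsB k)); apply/HrsB => //; exact: fideal_gen.
- have [Fc Ec] := cc_spec k.
  rewrite hminus; [|exact: fY|exact: fX].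
  by rewrite (hX Fc) Ec subrr.
- have [Fs Es] := ss_spec j i.
  rewrite hminus; [|by apply: fpolyM; apply: fpoly_letter|exact: fX].
  rewrite (hX Fs) Es /h evM; [|exact: fpoly_letter|exact: fpoly_letter].
  by rewrite !ev_letter subrr.
- have [Fs Es] := tt_spec i j.
  rewrite hminus; [|by apply: fpolyM; apply: fpoly_letter|exact: fX].
  rewrite (hX Fs) Es /h evM; [|exact: fpoly_letter|exact: fpoly_letter].
  by rewrite !ev_letter subrr.
Qed.

Lemma ideal_h (p : PZ) : fideal rs p -> h p = 0.
Proof.
elim => {p}.
- by move=> r; exact: hrel.
- exact: ev0.
- move=> p q Hp IHp Hq IHq.
  by rewrite /h evD -?/h ?IHp ?IHq ?addr0 //; apply: fideal_fpoly Frs _.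
- move=> c p Hp IHp.
  by rewrite /h evZ -?/h ?IHp ?scaler0 //; apply: fideal_fpoly Frs _.
- move=> q p Fq Hp IHp.
  by rewrite /h evM -?/h ?IHp ?kmul0r //; apply: fideal_fpoly Frs _.
- move=> q p Fq Hp IHp.
  by rewrite /h evM -?/h ?IHp ?kmul0l //; apply: fideal_fpoly Frs _.
Qed.

Lemma cong_h (p q : PZ) : fpoly p -> fpoly q -> cong rs p q -> h p = h q.
Proof.
move=> Fp Fq /ideal_h; rewrite hminus // => /eqP; rewrite subr_eq0 => /eqP.
by [].
Qed.

Local Notation cg := (cong rs).
Local Notation lX i := (@letter K _ (sX i)).
Local Notation lY j := (@letter K _ (sY j)).

Lemma eX0 : eX (@fzero K n) = @fzero K (n + m). Proof. exact: emb0. Qed.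
Lemma eY0 : eY (@fzero K m) = @fzero K (n + m). Proof. exact: emb0. Qed.
Lemma eXl i : eX (letter i) = lX i. Proof. exact/emb_letter/sX_inj. Qed.
Lemma eYl j : eY (letter j) = lY j. Proof. exact/emb_letter/sY_inj. Qed.
Lemma eXML i p : fpoly p -> eX (fmul (letter i) p) = fmul (lX i) (eX p).
Proof. by move=> [p0 _]; apply/embML/p0/sX_inj. Qed.
Lemma eYML j p : fpoly p -> eY (fmul (letter j) p) = fmul (lY j) (eY p).
Proof. by move=> [p0 _]; apply/embML/p0/sY_inj. Qed.
Lemma eXM p q : fpoly p -> fpoly q -> eX (fmul p q) = fmul (eX p) (eX q).
Proof. by move=> Fp Fq; apply/embM/Fq/Fp/sX_inj. Qed.
Lemma eYM p q : fpoly p -> fpoly q -> eY (fmul p q) = fmul (eY p) (eY q).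
Proof. by move=> Fp Fq; apply/embM/Fq/Fp/sY_inj. Qed.


Lemma claimYX j r : fpoly r -> exists2 r', fpoly r' & cg (fmul (lY j) (eX r)) (eX r').
Proof.
move=> /fpoly_Gen Gr; elim: Gr => {r}.
- exists (@fzero K n); first exact: fpoly0.
  by apply: cong_eq; rewrite eX0 fmul0r.
- move=> i; exists (ss j i); first by case: (ss_spec j i).
  by rewrite eXl; exact: (rs_gen (inr (inr (inl (j, i))))).
- move=> p q _ [p' Fp' Hp] _ [q' Fq' Hq]; exists (fadd p' q'); first exact: fpolyD.
  by rewrite /eX !embD fmulDr; apply: congD.
- move=> c p _ [p' Fp' Hp]; exists (fscale c p'); first exact: fpolyZ.
  by rewrite /eX !embZ fmulZr; apply: congZ.
- move=> i p Gp _; have Fp := Gen_fpoly Gp; have [Fs _] := ss_spec j i.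
  exists (fmul (ss j i) p); first exact: fpolyM.
  rewrite eXML // -fmulA_letter // eXM //.
  apply: congMr; first exact: fX.
  exact: (rs_gen (inr (inr (inl (j, i))))).
Qed.

Lemma lift_left (Q : PZ) : fpoly Q ->
  (forall i, exists2 r, fpoly r & cg (fmul (lX i) Q) (eX r)) ->
  forall r, fpoly r -> exists2 r', fpoly r' & cg (fmul (eX r) Q) (eX r').
Proof.
move=> FQ H r /fpoly_Gen Gr; elim: Gr => {r}.
- exists (@fzero K n); first exact: fpoly0.
  by apply: cong_eq; rewrite eX0 fmul0l.
- by move=> i; rewrite eXl; exact: H.
- move=> p q _ [p' Fp' Hp] _ [q' Fq' Hq]; exists (fadd p' q'); first exact: fpolyD.
  by rewrite /eX !embD fmulDl; apply: congD.
- move=> c p _ [p' Fp' Hp]; exists (fscale c p'); first exact: fpolyZ.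
  by rewrite /eX !embZ fmulZl; apply: congZ.
- move=> i p Gp [p' Fp' Hp]; have Fp := Gen_fpoly Gp.
  exists (fmul (letter i) p'); first exact: fpolyML.
  rewrite eXML // fmulA_letter; last by have [] := fX Fp.
  rewrite eXML //; apply: congMl => //; exact: fpoly_letter.
Qed.

Lemma claimXY q : fpoly q -> forall i, exists2 r, fpoly r & cg (fmul (lX i) (eY q)) (eX r).
Proof.
move=> /fpoly_Gen Gq; elim: Gq => {q}.
- move=> i; exists (@fzero K n); first exact: fpoly0.
  by apply: cong_eq; rewrite eX0 eY0 fmul0r.
- move=> j i; exists (tt i j); first by case: (tt_spec i j).
  by rewrite eYl; exact: (rs_gen (inr (inr (inr (i, j))))).
- move=> p q _ Hp _ Hq i; have [p' Fp' Hp'] := Hp i; have [q' Fq' Hq'] := Hq i.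
  exists (fadd p' q'); first exact: fpolyD.
  by rewrite /eX /eY !embD fmulDr; apply: congD.
- move=> c p _ Hp i; have [p' Fp' Hp'] := Hp i.
  exists (fscale c p'); first exact: fpolyZ.
  by rewrite /eX /eY !embZ fmulZr; apply: congZ.
- move=> j p Gp Hp i; have Fp := Gen_fpoly Gp; have [Ft _] := tt_spec i j.
  rewrite eYML // -fmulA_letter //.
  have [r Fr Hr] := lift_left (fY Fp) Hp Ft.
  exists r => //; apply: cong_trans Hr.
  apply: congMr; first exact: fY.
  exact: (rs_gen (inr (inr (inr (i, j))))).
Qed.

Lemma claimYXgen q r : fpoly q -> fpoly r -> exists2 r', fpoly r' & cg (fmul (eY q) (eX r)) (eX r').
Proof.
move=> /fpoly_Gen Gq Fr; elim: Gq => {q}.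
- exists (@fzero K n); first exact: fpoly0.
  by apply: cong_eq; rewrite eX0 eY0 fmul0l.
- by move=> j; rewrite eYl; exact: claimYX.
- move=> p q _ [p' Fp' Hp] _ [q' Fq' Hq]; exists (fadd p' q'); first exact: fpolyD.
  by rewrite /eY /eX !embD fmulDl; apply: congD.
- move=> c p _ [p' Fp' Hp]; exists (fscale c p'); first exact: fpolyZ.
  by rewrite /eX /eY !embZ fmulZl; apply: congZ.
- move=> j p Gp [p' Fp' Hp]; have Fp := Gen_fpoly Gp.
  rewrite eYML // fmulA_letter; last by have [] := fY Fp.
  have [r' Fr' Hr'] := claimYX j Fp'.
  exists r' => //; apply: cong_trans Hr'.
  apply: congMl => //; exact: fpoly_letter.
Qed.

Lemma claimA p : fpoly p -> exists pY, exists pX,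
  [/\ fpoly pY, fpoly pX & cg p (fadd (eY pY) (eX pX))].
Proof.
move=> /fpoly_Gen Gp; elim: Gp => {p}.
- exists (@fzero K m), (@fzero K n); split; try exact: fpoly0.
  apply: cong_eq; rewrite eX0 eY0; apply: feq => w; by rewrite /fadd /fzero addr0.
- move=> z; case E: (split z) => [i|j].
  + have -> : z = sX i by rewrite -(splitK z) E.
    exists (@fzero K m), (letter i); split; [exact: fpoly0|exact: fpoly_letter|].
    apply: cong_eq; rewrite eY0 eXl; apply: feq => w; by rewrite /fadd /fzero add0r.
  + have -> : z = sY j by rewrite -(splitK z) E.
    exists (letter j), (@fzero K n); split; [exact: fpoly_letter|exact: fpoly0|].
    apply: cong_eq; rewrite eX0 eYl; apply: feq => w; by rewrite /fadd /fzero addr0.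
- move=> p q _ [pY [pX [FpY FpX Hp]]] _ [qY [qX [FqY FqX Hq]]].
  exists (fadd pY qY), (fadd pX qX); split; try exact: fpolyD.
  apply: cong_trans (congD Hp Hq) _; apply: cong_eq.
  rewrite /eX /eY !embD; apply: feq => w; by rewrite /fadd addrACA.
- move=> c p _ [pY [pX [FpY FpX Hp]]].
  exists (fscale c pY), (fscale c pX); split; try exact: fpolyZ.
  apply: cong_trans (congZ c Hp) _; apply: cong_eq.
  rewrite /eX /eY !embZ; apply: feq => w; by rewrite /fadd /fscale mulrDr.
- move=> z p _ [pY [pX [FpY FpX Hp]]].
  have Fz := fpoly_letter K z.
  have H1 := congMl Fz Hp; rewrite fmulDr in H1.
  case E: (split z) => [i|j].
  + have zE : z = sX i by rewrite -(splitK z) E.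
    rewrite zE in H1 *.
    have [r Fr Hr] := claimXY FpY i.
    exists (@fzero K m), (fadd r (fmul (letter i) pX)); split; first exact: fpoly0.
      by apply: fpolyD => //; apply: fpolyML.
    apply: cong_trans H1 _.
    apply: cong_trans (congD Hr (cong_eq rs (esym (eXML i FpX)))) _.
    apply: cong_eq; rewrite eY0 /eX embD; apply: feq => w; by rewrite /fadd /fzero add0r.
  + have zE : z = sY j by rewrite -(splitK z) E.
    rewrite zE in H1 *.
    have [r Fr Hr] := claimYX j FpX.
    exists (fmul (letter j) pY), r; split => //; first exact: fpolyML.
    apply: cong_trans H1 _.
    by rewrite eYML //; apply: congD => //; apply: cong_eq.
Qed.

Lemma claimB q : fideal rsQ q -> exists2 r, fpoly r & cg (eY q) (eX r).
Proof.
elim => {q}.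
- move=> k; exists (cc k); first by case: (cc_spec k).
  exact: (rs_gen (inr (inl k))).
- exists (@fzero K n); first exact: fpoly0.
  by apply: cong_eq; rewrite eX0 eY0.
- move=> p q _ [p' Fp' Hp] _ [q' Fq' Hq]; exists (fadd p' q'); first exact: fpolyD.
  by rewrite /eX /eY !embD; apply: congD.
- move=> c p _ [p' Fp' Hp]; exists (fscale c p'); first exact: fpolyZ.
  by rewrite /eX /eY !embZ; apply: congZ.
- move=> q p Fq Ip [r Fr Hr]; have Fp := fideal_fpoly FrsQ Ip.
  rewrite eYM //.
  have [r' Fr' Hr'] := claimYXgen Fq Fr.
  exists r' => //; apply: cong_trans Hr'.
  by apply: congMl => //; apply: fY.
- move=> q p Fq Ip [r Fr Hr]; have Fp := fideal_fpoly FrsQ Ip.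
  rewrite eYM //.
  have [r' Fr' Hr'] := lift_left (fY Fq) (claimXY Fq) Fr.
  exists r' => //; apply: cong_trans Hr'.
  by apply: congMr => //; apply: fY.
Qed.

Lemma claimC q : fideal rsB q -> fideal rs (eX q).
Proof.
elim => {q}.
- by move=> k; exact: (rs_gen (inl k)).
- by rewrite eX0; exact: fideal_zero.
- by move=> p q _ Hp _ Hq; rewrite /eX embD; apply: fideal_add.
- by move=> c p _ Hp; rewrite /eX embZ; apply: fideal_scale.
- move=> q p Fq Ip Hp; have Fp := fideal_fpoly FrsB Ip.
  by rewrite eXM //; apply: fideal_mull => //; apply: fX.
- move=> q p Fq Ip Hp; have Fp := fideal_fpoly FrsB Ip.
  by rewrite eXM //; apply: fideal_mulr => //; apply: fX.
Qed.

Lemma h_ker p : fpoly p -> (kzero (h p) <-> fideal rs p).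
Proof.
move=> Fp; split; last exact: ideal_h.
rewrite /kzero => hp0.
have [pY [pX [FpY FpX Hp]]] := claimA Fp.
have Fe : fpoly (fadd (eY pY) (eX pX)) by apply: fpolyD; [apply: fY|apply: fX].
have := cong_h Fp Fe Hp.
have -> : h (fadd (eY pY) (eX pX)) = h (eY pY) + h (eX pX).
  by apply: evD; [apply: fY|apply: fX].
rewrite hp0 (hX FpX) => /esym E.
have BhY : B (h (eY pY)).
  have -> : h (eY pY) = - f pX by apply/eqP; rewrite -addr_eq0 E.
  exact/(JN HB)/Bf.
have BgY : B (g pY) by apply: (JofeqJ HB BhY); apply: hY.
have [r Fr Hr] := claimB ((HrsQ FpY).1 BgY).
have H2 : cg p (eX (fadd r pX)).
  apply: cong_trans Hp _; rewrite /eX embD; apply: congD => //.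
  exact: cong_eq.
have FrX : fpoly (fadd r pX) by apply: fpolyD.
have := cong_h Fp (fX FrX) H2; rewrite hp0 (hX FrX) => /esym f0.
have I1 := claimC ((HrsB FrX).1 f0).
have := fideal_add H2 I1.
suff -> : fadd (minus p (eX (fadd r pX))) (eX (fadd r pX)) = p by [].
by apply: feq => w; rewrite /minus /fadd /fscale mulN1r subrK.
Qed.

Lemma h_fp : fp_subquot (@kall K A) (@kzero K A).
Proof.
exists (n + m), h; split; first exact: h_fhom.
exists #|{: RT}|, rs; split; first exact: Frs.
exact: h_ker.
Qed.
End Main.

Theorem lemma2p2 (K : comPzRingType) (A : kalgType K) (B : A -> Prop) :
  is_ideal B ->
  (ideal_fin_gen B -> quot_fin_gen B -> fin_gen A) /\
  (ideal_fin_pres B -> quot_fin_pres B -> fin_pres A).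
Proof.
move=> HB; split.
- move=> [n [f Hf]] [m [g Hg]].
  by exists (n + m), (h f g); exact: (h_fhom HB Hf Hg).
- move=> [n [f [Hf [mB [rsB [FrsB HrsB]]]]]] [m [g [Hg [mQ [rsQ [FrsQ HrsQ]]]]]].
  exact: (h_fp HB Hf Hg FrsB FrsQ HrsB HrsQ).
Qed.
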